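(* Let $\sigma$ and $\tau$ be matchings, with $s=|\sigma|$ and $t=|\tau|$. The following are equivalent: (i) $\sigma\leq\tau$; (ii) $1(\sigma+1)1\ \leq\ 1(\tau+1)1(t+2)(t+2)$; (iii) $\sigma(s+1)(s+1)\ \leq\ 1(\tau+1)(t+2)(t+2)1$.
   Context: A matching of order $n$ is a partition of $[2n]$ into blocks (edges) of size two, identified with the word in $[n]^{2n}$ where both vertices of an edge carry the same letter and letters appear in increasing order of left vertices. $|\sigma|$ is the number of edges. For a matching $\alpha$, $\alpha+1$ denotes the word of $\alpha$ with $1$ added to each letter, and words are concatenated: e.g. $1(\sigma+1)1$ is $\sigma$ enclosed by one new edge, $1(\tau+1)1(t+2)(t+2)$ is $\tau$ enclosed by a new edge followed by a further separate edge, $\sigma(s+1)(s+1)$ is $\sigma$ followed by a separate edge, and $1(\tau+1)(t+2)(t+2)1$ is $\tau$ followed by a separate edge, all enclosed by a new edge. $\sigma\le\tau$ means $\sigma$ is a pattern of $\tau$: if $|\sigma|=k$, there are $i_1<\dots<i_{2k}$ with $\{i_p,i_q\}\in\tau$ iff $\{p,q\}\in\sigma$. *)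

(* Defs.v *)
From mathcomp Require Import all_boot.
Set Implicit Arguments. Unset Strict Implicit. Unset Printing Implicit Defensive.

(* A matching of order n is encoded as its canonical word in [n]^{2n}
   (a seq nat with letters 1..n): both vertices of an edge carry the same
   letter and letters appear in increasing order of left vertices. *)

Definition msize (w : seq nat) : nat := (size w)./2.

Definition is_matching (w : seq nat) : bool :=
  let n := msize w in
  [&& size w == n.*2,
      all (fun a => (0 < a) && (a <= n)) w,
      all (fun a => count_mem a w == 2) (iota 1 n) &
      all (fun a => index a w < index a.+1 w) (iota 1 n.-1)].

Definition mshift (k : nat) (w : seq nat) : seq nat := map (addn k) w.

Definition medge (w : seq nat) (p q : nat) : bool :=
  [&& p != q, p < size w, q < size w & nth 0 w p == nth 0 w q].

Definition mpattern (sigma tau : seq nat) : Prop :=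
  exists idx : seq nat,
    [/\ size idx = size sigma,
        sorted ltn idx,
        all (fun i => i < size tau) idx &
        forall p q, p < size sigma -> q < size sigma ->
          medge tau (nth 0 idx p) (nth 0 idx q) = medge sigma p q].

(* Main.v *)
Require Import Defs.
From mathcomp Require Import all_boot zify.

Definition mpat2 (sigma T : seq nat) : Prop :=
  exists f : nat -> nat, {in sigma &, injective f} /\ subseq (map f sigma) T.

Lemma idx_subseq (idx T : seq nat) : sorted ltn idx ->
  all (fun i => i < size T) idx -> subseq (map (nth 0 T) idx) T.
Proof.
move=> so al.
set m := [seq i \in idx | i <- iota 0 (size T)].
have E : idx = mask m (iota 0 (size T)).
  rewrite /m -filter_mask; apply: (irr_sorted_eq ltn_trans ltnn) => //.
    exact/sorted_filter/iota_ltn_sorted/ltn_trans.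
  move=> i; rewrite mem_filter mem_iota add0n /=.
  case Hi: (i \in idx) => //=; symmetry; exact: (allP al).
rewrite E map_mask (map_nth_iota0 _ (leqnn _)) take_size; exact: mask_subseq.
Qed.

Lemma subseq_idx (W T : seq nat) : subseq W T -> exists idx,
  [/\ sorted ltn idx, all (fun i => i < size T) idx & W = map (nth 0 T) idx].
Proof.
case/subseqP=> m sm ->.
exists (mask m (iota 0 (size T))); split.
- exact: (subseq_sorted ltn_trans (mask_subseq _ _) (iota_ltn_sorted 0 _)).
- by apply/allP=> i /mem_mask; rewrite mem_iota.
- by rewrite map_mask (map_nth_iota0 _ (leqnn _)) take_size.
Qed.

Lemma mpatternE sigma T : mpattern sigma T <-> mpat2 sigma T.
Proof.
split.
- case=> idx [si so al H].
  have U : uniq idx by apply: (sorted_uniq ltn_trans ltnn).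
  set W := map (nth 0 T) idx.
  have nW k : k < size sigma -> nth 0 W k = nth 0 T (nth 0 idx k).
    by move=> hk; rewrite /W (nth_map 0) // si.
  have key i j : i < size sigma -> j < size sigma ->
     (nth 0 W i == nth 0 W j) = (nth 0 sigma i == nth 0 sigma j).
    move=> hi hj; have [->|ne] := eqVneq i j; first by rewrite !eqxx.
    have := H i j hi hj; rewrite /medge nth_uniq ?si // ne hi hj /=.
    rewrite (allP al _ (mem_nth _ _)) ?si // (allP al _ (mem_nth _ _)) ?si //=.
    by rewrite !nW.
  exists (fun x => nth 0 W (index x sigma)); split.
  + move=> x y hx hy /eqP; rewrite key ?index_mem // !nth_index //.
    by move/eqP.
  + suff -> : map (fun x => nth 0 W (index x sigma)) sigma = W.
      exact: idx_subseq.
    apply: (@eq_from_nth _ 0); first by rewrite size_map /W size_map si.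
    move=> i; rewrite size_map => hi; rewrite (nth_map 0) //.
    have hm : nth 0 sigma i \in sigma by apply: mem_nth.
    apply/eqP; rewrite key ?index_mem // nth_index //.
- case=> f [inj sub]; case: (subseq_idx _ _ sub) => idx [so al E].
  have U : uniq idx by apply: (sorted_uniq ltn_trans ltnn).
  have si : size idx = size sigma by rewrite -(size_map (nth 0 T)) -E size_map.
  exists idx; split => // p q hp hq.
  rewrite /medge nth_uniq ?si // hp hq (allP al _ (mem_nth _ _)) ?si //.
  rewrite (allP al _ (mem_nth _ _)) ?si //=.
  rewrite -!(nth_map 0 0 (nth 0 T)) ?si // -E !(nth_map 0) //.
  by rewrite (inj_in_eq inj) ?mem_nth.
Qed.

Lemma L0 (x y : nat) s t : subseq (x :: s) (y :: t) = subseq (if x == y then s else x :: s) t.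
Proof. by []. Qed.

Lemma L1 (x : nat) s u t : x \notin u -> subseq (x :: s) (u ++ t) = subseq (x :: s) t.
Proof.
elim: u => // y u IH; rewrite inE negb_or => /andP[ne nu].
by rewrite cat_cons L0 (negbTE ne) IH.
Qed.

Lemma L1r (x : nat) s u t : x \notin u -> subseq (s ++ [:: x]) (t ++ u) = subseq (s ++ [:: x]) t.
Proof.
move=> nu; rewrite -subseq_rev -[RHS]subseq_rev !rev_cat.
have -> : rev [:: x] = [:: x] by [].
by rewrite cat1s L1 ?mem_rev.
Qed.

Lemma L3 (x : nat) s t : x \notin s -> subseq s (x :: t) = subseq s t.
Proof.
case: s => [|y s]; first by rewrite !sub0seq.
by rewrite inE negb_or => /andP[ne _]; rewrite L0 eq_sym (negbTE ne).
Qed.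

Lemma L4 (x : nat) s t : x \notin s -> subseq s (t ++ [:: x]) = subseq s t.
Proof.
move=> ns; rewrite -subseq_rev -[RHS]subseq_rev rev_cat.
have -> : rev [:: x] = [:: x] by [].
by rewrite cat1s L3 ?mem_rev.
Qed.

Lemma L5 (x : nat) s t : subseq (s ++ [:: x]) (t ++ [:: x]) = subseq s t.
Proof.
rewrite -subseq_rev !rev_cat.
have -> : rev [:: x] = [:: x] by [].
by rewrite !cat1s L0 eqxx subseq_rev.
Qed.

Lemma count_le (s1 s2 : seq nat) x : subseq s1 s2 -> count_mem x s1 <= count_mem x s2.
Proof.
move=> H; apply: (proj2 (count_subseqP s1 s2)); exists s1 => //.
Qed.

Lemma mfacts w : is_matching w ->
  (forall x, x \in w -> 0 < x <= msize w) /\ (forall x, x \in w -> count_mem x w = 2).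
Proof.
case/and4P => _ /allP H1 /allP H2 _; split => x hx; first exact: H1.
apply/eqP/H2; rewrite mem_iota; have /andP[a b] := H1 x hx.
by rewrite a add1n ltnS.
Qed.

Lemma memM t tau y : (forall x, x \in tau -> 0 < x <= t) ->
  y \in mshift 1 tau -> 1 < y <= t.+1.
Proof.
move=> H /mapP [z hz ->]; have /andP[a b] := H z hz.
by rewrite add1n ltnS a ltnS.
Qed.

Lemma back sigma tau f : {in sigma &, injective f} ->
  subseq (map f sigma) (mshift 1 tau) -> mpat2 sigma tau.
Proof.
move=> inj sub.
have pos x : x \in sigma -> f x = (f x).-1.+1.
  move=> hx; have : f x \in mshift 1 tau by apply: (mem_subseq sub); apply: map_f.
  by case/mapP => z _ ->.
exists (fun x => (f x).-1); split.
  by move=> x y hx hy E; apply: inj => //; rewrite (pos x hx) (pos y hy) E.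
have := map_subseq predn sub.
by rewrite -map_comp /mshift -map_comp (@eq_map _ _ (predn \o addn 1) id) ?map_id.
Qed.

Lemma fwd2 sigma tau : is_matching sigma -> is_matching tau -> mpat2 sigma tau ->
  mpat2 ([:: 1] ++ mshift 1 sigma ++ [:: 1])
        ([:: 1] ++ mshift 1 tau ++ [:: 1; msize tau + 2; msize tau + 2]).
Proof.
move=> hs ht [f [inj sub]].
have [ps _] := mfacts _ hs; have [pt _] := mfacts _ ht.
have fpos z : z \in sigma -> 0 < f z <= msize tau.
  by move=> hz; apply: pt; apply: (mem_subseq sub); apply: map_f.
have hP x : x \in [:: 1] ++ mshift 1 sigma ++ [:: 1] -> x = 1 \/ exists2 z, z \in sigma & x = 1 + z.
  rewrite /= inE mem_cat inE => /orP[/eqP->|/orP[/mapP[z hz ->]|/eqP->]]; by [left|right; exists z].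
set g := fun x => if x == 1 then 1 else 1 + f x.-1.
have gz z : z \in sigma -> g (1 + z) = 1 + f z.
  move=> hz; have := ps z hz; rewrite /g; case: eqP => //; lia.
exists g; split.
- move=> x y /hP[->|[z hz ->]] /hP[->|[z' hz' ->]] //.
  + by rewrite gz //; have := fpos z' hz'; rewrite /g /=; lia.
  + by rewrite gz //; have := fpos z hz; rewrite /g /=; lia.
  + by rewrite !gz // => /addnI /inj ->.
- have E : map g (mshift 1 sigma) = mshift 1 (map f sigma).
    by rewrite /mshift -!map_comp; apply/eq_in_map => z hz /=; rewrite gz.
  rewrite !map_cat E /=; apply: cat_subseq; first exact: map_subseq.
  by rewrite sub1seq inE eqxx.
Qed.

Lemma fwd3 sigma tau : is_matching sigma -> is_matching tau -> mpat2 sigma tau ->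
  mpat2 (sigma ++ [:: msize sigma + 1; msize sigma + 1])
        ([:: 1] ++ mshift 1 tau ++ [:: msize tau + 2; msize tau + 2; 1]).
Proof.
move=> hs ht [f [inj sub]].
have [ps _] := mfacts _ hs; have [pt _] := mfacts _ ht.
have fpos z : z \in sigma -> 0 < f z <= msize tau.
  by move=> hz; apply: pt; apply: (mem_subseq sub); apply: map_f.
set g := fun x => if x == msize sigma + 1 then msize tau + 2 else 1 + f x.
have gz z : z \in sigma -> g z = 1 + f z.
  move=> hz; have := ps z hz; rewrite /g; case: eqP => //; lia.
have gs : g (msize sigma + 1) = msize tau + 2 by rewrite /g eqxx.
have hP x : x \in sigma ++ [:: msize sigma + 1; msize sigma + 1] -> x \in sigma \/ x = msize sigma + 1.
  by rewrite mem_cat !inE => /orP[->|/orP[]/eqP->]; [left|right|right].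
exists g; split.
- move=> x y /hP[hx|->] /hP[hy|->] //.
  + by rewrite !gz // => /addnI /inj ->.
  + by rewrite (gz x) // gs; have := fpos x hx; lia.
  + by rewrite (gz y) // gs; have := fpos y hy; lia.
- have E : map g sigma = mshift 1 (map f sigma).
    by rewrite /mshift -!map_comp; apply/eq_in_map => z hz /=; rewrite gz.
  rewrite map_cat E /= /g eqxx; apply: subseq_trans (subseq_cons _ _).
  apply: cat_subseq; first exact: map_subseq.
  exact: (prefix_subseq _ [:: 1]).
Qed.

Lemma bwd2 sigma tau : is_matching sigma -> is_matching tau ->
  mpat2 ([:: 1] ++ mshift 1 sigma ++ [:: 1])
        ([:: 1] ++ mshift 1 tau ++ [:: 1; msize tau + 2; msize tau + 2]) ->
  mpat2 sigma tau.
Proof.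
move=> hs ht [f [inj sub]].
have [pt _] := mfacts _ ht.
have [->|ne] := eqVneq sigma [::].
  by exists id; split=> //; rewrite sub0seq.
apply: (back _ _ (fun x => f (1 + x))).
  move=> x y hx hy E; apply: (@addnI 1); apply: inj => //; rewrite !mem_cat ?(map_f (addn 1)) ?orbT //.
set M := mshift 1 tau; set X := msize tau + 2.
have hM y : y \in M -> 1 < y <= (msize tau).+1 by apply: memM.
have n1M : 1 \notin M by apply/negP => /hM; lia.
set a := f 1; set W := map (fun x => f (1 + x)) sigma.
have Em : map f ([:: 1] ++ mshift 1 sigma ++ [:: 1]) = a :: W ++ [:: a].
  by rewrite /= map_cat /mshift -map_comp.
rewrite Em in sub; rewrite [[:: 1] ++ _]/= L0 in sub.
have [a1|na1] := eqVneq a 1.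
  rewrite a1 eqxx (_ : M ++ [:: 1; X; X] = (M ++ [:: 1]) ++ [:: X; X]) in sub; last by rewrite -catA.
  rewrite L1r ?L5 in sub; first by []. by rewrite !inE /X; lia.
rewrite (negbTE na1) in sub.
have [aM|naM] := boolP (a \in M).
  rewrite -cat_cons L1r in sub; last by have := hM a aM; rewrite !inE /X; lia.
  exact: subseq_trans (subseq_trans (prefix_subseq W [:: a]) (subseq_cons _ a)) sub.
rewrite L1 // L0 (negbTE na1) in sub.
have := size_subseq sub; rewrite /= size_cat /W size_map /=.
by move: ne; case: (sigma) => //= *; lia.
Qed.

Lemma bwd3 sigma tau : is_matching sigma -> is_matching tau ->
  mpat2 (sigma ++ [:: msize sigma + 1; msize sigma + 1])
        ([:: 1] ++ mshift 1 tau ++ [:: msize tau + 2; msize tau + 2; 1]) ->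
  mpat2 sigma tau.
Proof.
move=> hs ht [f [inj sub]].
have [pt _] := mfacts _ ht; have [_ cs] := mfacts _ hs.
have [->|ne] := eqVneq sigma [::].
  by exists id; split=> //; rewrite sub0seq.
have injs : {in sigma &, injective f}.
  by move=> x y hx hy; apply: inj; rewrite mem_cat ?hx ?hy.
apply: (back _ _ f) => //.
set M := mshift 1 tau; set X := msize tau + 2.
have hM y : y \in M -> 1 < y <= (msize tau).+1 by apply: memM.
have n1M : 1 \notin M by apply/negP => /hM; lia.
set b := f (msize sigma + 1); set W := map f sigma.
rewrite map_cat -subseq_rev rev_cat in sub.
have E1 : rev (map f [:: msize sigma + 1; msize sigma + 1]) = [:: b; b] by [].
have E2 : rev ([:: 1] ++ mshift 1 tau ++ [:: msize tau + 2; msize tau + 2; 1]) = 1 :: X :: X :: (rev M ++ [:: 1]).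
  by rewrite !rev_cat.
rewrite E1 E2 -/W in sub.
suff H : subseq (rev W) (rev M ++ [:: 1]).
  have n1W : 1 \notin rev W.
    apply/negP; rewrite mem_rev => /mapP [x hx ex].
    have C : count_mem (f x) W = 2.
      rewrite count_map (@eq_in_count _ _ (pred1 x)) ?cs //.
      by move=> y hy /=; rewrite (inj_in_eq injs).
    rewrite -ex in C.
    have := count_le _ _ 1 H; rewrite count_cat !count_rev (count_memPn n1M) C /=.
    done.
  by rewrite L4 // subseq_rev in H.
rewrite !cat_cons cat0s in sub.
have [b1|nb1] := eqVneq b 1.
  rewrite b1 L0 eqxx -[X :: X :: _]/([:: X; X] ++ _) L1 in sub; last by rewrite !inE /X; lia.
  rewrite L1 ?mem_rev // L0 eqxx in sub.
  move: sub; rewrite subseq0 => /eqP E.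
  have : size (rev W) = 0 by rewrite E.
  by rewrite size_rev /W size_map; move: ne; case: (sigma).
rewrite L0 (negbTE nb1) in sub.
have [bX|nbX] := eqVneq b X.
  by rewrite bX L0 eqxx L0 eqxx in sub.
rewrite L0 (negbTE nbX) L0 (negbTE nbX) in sub.
exact: subseq_trans (suffix_subseq [:: b; b] _) sub.
Qed.

Theorem lemma1 (sigma tau : seq nat) :
  is_matching sigma -> is_matching tau ->
  let s := msize sigma in
  let t := msize tau in
  [/\ (mpattern sigma tau <->
        mpattern ([:: 1] ++ mshift 1 sigma ++ [:: 1])
                 ([:: 1] ++ mshift 1 tau ++ [:: 1; t + 2; t + 2])),
      (mpattern sigma tau <->
        mpattern (sigma ++ [:: s + 1; s + 1])
                 ([:: 1] ++ mshift 1 tau ++ [:: t + 2; t + 2; 1])) &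
      (mpattern ([:: 1] ++ mshift 1 sigma ++ [:: 1])
                 ([:: 1] ++ mshift 1 tau ++ [:: 1; t + 2; t + 2]) <->
        mpattern (sigma ++ [:: s + 1; s + 1])
                 ([:: 1] ++ mshift 1 tau ++ [:: t + 2; t + 2; 1]))].
Proof.
move=> hs ht s t.
have e1 : mpattern sigma tau <->
        mpattern ([:: 1] ++ mshift 1 sigma ++ [:: 1])
                 ([:: 1] ++ mshift 1 tau ++ [:: 1; t + 2; t + 2]).
  rewrite !mpatternE; split; [exact: fwd2 | exact: bwd2].
have e2 : mpattern sigma tau <->
        mpattern (sigma ++ [:: s + 1; s + 1])
                 ([:: 1] ++ mshift 1 tau ++ [:: t + 2; t + 2; 1]).
  rewrite !mpatternE; split; [exact: fwd3 | exact: bwd3].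
split => //; split => h; [apply/e2/e1 | apply/e1/e2] => //.
Qed.
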